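(* Let $p>q>1$ be relatively prime integers. If a sequence is $\frac{p}{q}$-automatic, then it is the image under a coding of a fixed point of a $q$-block substitution all of whose images have length $p$.
   Context: Let $A_p=\{0,1,\ldots,p-1\}$. For a word $w=w_\ell\cdots w_0\in A_p^*$, $\mathrm{val}_{\frac pq}(w)=\sum_{i=0}^{\ell}\frac{w_i}{q}\left(\frac pq\right)^i$. Every integer $n\ge 0$ has a unique representation $\mathrm{rep}_{\frac pq}(n)\in A_p^*$ not starting with $0$ such that $\mathrm{val}_{\frac pq}(\mathrm{rep}_{\frac pq}(n))=n$, with $\mathrm{rep}_{\frac pq}(0)=\varepsilon$. A sequence $\mathbf{x}$ over a finite alphabet $B$ is $\frac pq$-automatic if there is a deterministic finite automaton with output $(Q,q_0,A_p,\delta,\tau:Q\to B)$ with $x_n=\tau(\delta(q_0,\mathrm{rep}_{\frac pq}(n)))$ for all $n\ge0$. A coding is a letter-to-letter map. A $q$-block substitution is a map $g:C^q\to C^*$ acting on words by $g(w_0\cdots w_{q-1})g(w_q\cdots w_{2q-1})\cdots$; an infinite word $\mathbf{w}=w_0w_1\cdots$ is a fixed point of $g$ if $\mathbf{w}=g(w_0\cdots w_{q-1})g(w_q\cdots w_{2q-1})\cdots$. ''All images have length $p$'' means $|g(u)|=p$ for every $u\in C^q$. *)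

(* Defs.v *)
From mathcomp Require Import all_boot all_order all_algebra.
Set Implicit Arguments. Unset Strict Implicit. Unset Printing Implicit Defensive.
Import Order.TTheory GRing.Theory Num.Theory.

(* A word w = w_l ... w_0 over A_p = 'I_p is a seq written left to right,
   so w_0 (least significant digit) is the LAST element. *)
Definition digit_at (p : nat) (w : seq 'I_p) (i : nat) : nat :=
  nth 0%N (rev (map (@nat_of_ord p) w)) i.

Definition valpq (p q : nat) (w : seq 'I_p) : rat :=
  (\sum_(i < size w) ((digit_at w i)%:R / q%:R) * (p%:R / q%:R) ^+ i)%R.

Definition no_lead0 (p : nat) (w : seq 'I_p) : bool :=
  if w is a :: _ then nat_of_ord a != 0%N else true.

(* rep_{p/q}(n) is the unique w with no_lead0 w and valpq w = n. *)
Definition is_rep (p q : nat) (n : nat) (w : seq 'I_p) : Prop :=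
  no_lead0 w /\ valpq q w = n%:R%R.

Definition dfa_run (Q : Type) (p : nat) (delta : Q -> 'I_p -> Q) (q0 : Q)
  (w : seq 'I_p) : Q := foldl delta q0 w.

Definition pq_automatic (p q : nat) (B : finType) (x : nat -> B) : Prop :=
  exists (Q : finType) (q0 : Q) (delta : Q -> 'I_p -> Q) (tau : Q -> B),
    forall (n : nat) (w : seq 'I_p), is_rep q n w -> x n = tau (dfa_run delta q0 w).

Definition block (C : Type) (q : nat) (w : nat -> C) (k : nat) : q.-tuple C :=
  [tuple w (k * q + j)%N | j < q].

(* w is a fixed point of the q-block substitution g:
   w = g(block 0) g(block 1) ... ; i.e. every finite prefix of the
   concatenation agrees with w. *)
Definition block_fixed_point (C : Type) (q : nat) (g : q.-tuple C -> seq C)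
  (w : nat -> C) : Prop :=
  forall k i : nat,
    (i < size (flatten [seq g (block q w j) | j <- iota 0 k]))%N ->
    nth (w i) (flatten [seq g (block q w j) | j <- iota 0 k]) i = w i.

(* Main.v *)
Require Import Defs.
From mathcomp Require Import all_boot all_order all_algebra.
From mathcomp Require Import zify ring lra.
Set Implicit Arguments. Unset Strict Implicit. Unset Printing Implicit Defensive.
Import Order.TTheory GRing.Theory Num.Theory.

Lemma valpq_rcons p q (u : seq 'I_p) (a : 'I_p) :
  valpq q (rcons u a) = ((p%:R / q%:R) * valpq q u + (a : nat)%:R / q%:R)%R.
Proof.
rewrite /valpq size_rcons big_ord_recl.
rewrite {1}/digit_at map_rcons rev_rcons /= expr0 mulr1 addrC.
congr (_ + _)%R.
rewrite mulr_sumr; apply: eq_bigr => i _.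
rewrite /digit_at map_rcons rev_rcons /= exprS.
rewrite /bump /= add0n. ring.
Qed.

Fixpoint repf (p' q : nat) (fuel n : nat) : seq 'I_p'.+1 :=
  match fuel with
  | 0 => [::]
  | f.+1 => if n == 0 then [::]
            else rcons (repf p' q f (q * n %/ p'.+1)) (inord (q * n %% p'.+1))
  end.

Lemma par_lt p' q n : q < p'.+1 -> 0 < n -> q * n %/ p'.+1 < n.
Proof. move=> hq hn; rewrite ltn_divLR //; rewrite mulnC ltn_pmul2l //. Qed.

Lemma repf_enough p' q : q < p'.+1 -> forall f1 f2 n, n <= f1 -> n <= f2 ->
  repf p' q f1 n = repf p' q f2 n.
Proof.
move=> hq; elim=> [|a IH] [|b] n h1 h2 /=.
- by [].
- by move: h1; rewrite leqn0 => /eqP ->.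
- by move: h2; rewrite leqn0 => /eqP ->.
case: eqP => // /eqP hn; rewrite -lt0n in hn.
have := par_lt hq hn => hm.
by rewrite (IH b) //; lia.
Qed.

Definition rep p' q n := repf p' q n n.

Lemma rep_rec p' q n : q < p'.+1 -> 0 < n ->
  rep p' q n = rcons (rep p' q (q * n %/ p'.+1)) (inord (q * n %% p'.+1)).
Proof.
move=> hq hn; rewrite /rep; case: n hn => [|a] //= _.
rewrite (repf_enough hq (n:=q * a.+1 %/ p'.+1) (f2 := q * a.+1 %/ p'.+1)) //.
have := par_lt hq (ltn0Sn a); lia.
Qed.

Lemma rep_ok p' q n : 1 < q -> q < p'.+1 -> is_rep q n (rep p' q n).
Proof.
move=> h1 hq; elim/ltn_ind: n => n IH.
case: (posnP n) => [->|hn]; first by split => //; rewrite /valpq big_ord0.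
have [IH1 IH2] := IH _ (par_lt hq hn).
rewrite (rep_rec hq hn); split.
- move: IH1; case E: (rep p' q (q * n %/ p'.+1)) => [|c l] //= _.
  rewrite inordK ?ltn_pmod //.
  have : q * n %/ p'.+1 = 0.
    case: (posnP (q * n %/ p'.+1)) => // hm.
    by have := rep_rec hq hm; rewrite E; case: (rep _ _ _).
  move=> hm0; have := divn_eq (q * n) p'.+1; rewrite hm0 mul0n add0n => <-.
  lia.
- rewrite valpq_rcons IH2 inordK ?ltn_pmod //.
  have hd := divn_eq (q * n) p'.+1.
  have hq0 : (q%:R : rat)%R != 0%R by rewrite pnatr_eq0; lia.
  move: hd; set m := q * n %/ p'.+1; set a := q * n %% p'.+1 => hd.
  apply: (mulfI hq0). rewrite -natrM hd natrD natrM. field; exact: hq0.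
Qed.

Theorem mainTheorem6 (p q : nat) (hq : (1 < q)%N) (hpq : (q < p)%N)
  (hcop : coprime p q) (B : finType) (x : nat -> B) :
  pq_automatic p q x ->
  exists (C : finType) (g : q.-tuple C -> seq C) (w : nat -> C) (f : C -> B),
    (forall u : q.-tuple C, size (g u) = p) /\
    block_fixed_point g w /\
    (forall n : nat, x n = f (w n)).
Proof.
case: p hpq hcop x => [|p'] // hpq _ x [Q [q0 [delta [tau Hx]]]].
pose s n := dfa_run delta q0 (rep p' q n).
have srec n : 0 < n -> s n = delta (s (q * n %/ p'.+1)) (inord (q * n %% p'.+1)).
  by move=> hn; rewrite /s (rep_rec hpq hn) /dfa_run foldl_rcons.
pose w n := (s n, n == 0).
pose h (u : q.-tuple (Q * bool)) j :=
  let c := nth (q0, false) u (q * j %/ p'.+1) in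
  if (j == 0) && c.2 then c else (delta c.1 (inord (q * j %% p'.+1)), false).
pose g (u : q.-tuple (Q * bool)) := [seq h u j | j <- iota 0 p'.+1].
exists (Q * bool)%type, g, w, (fun c => tau c.1).
have hb k i : i < q -> nth (q0, false) (block q w k) i = w (k * q + i).
  move=> hi; have := nth_mktuple (fun j : 'I_q => w (k * q + j)) (q0, false) (Ordinal hi).
  by [].
have hg k : g (block q w k) = [seq w j | j <- iota (k * p'.+1) p'.+1].
  rewrite /g -(addn0 (k * p'.+1)) iotaDl -map_comp; apply/eq_in_map => j.
  rewrite mem_iota add0n => /andP [_ hj] /=.
  rewrite /h.
  have hqj : q * j %/ p'.+1 < q by rewrite ltn_divLR // ltn_mul2l; lia.
  rewrite hb //.
  case: (posnP j) => [->|hj0].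
  - rewrite muln0 div0n mod0n !addn0 /=.
    case: (posnP k) => [->|hk] /=; first by [].
    have -> : (k * q == 0) = false by lia.
    rewrite /w (srec (k * p'.+1)); last by lia.
    have -> : (k * p'.+1 == 0) = false by lia.
    by rewrite mulnA (mulnC q) mulnK // modnMl.
  - rewrite /=.
    rewrite /w /=.
    have -> : (k * p'.+1 + j == 0) = false by lia.
    rewrite (srec (k * p'.+1 + j)); last by lia.
    have -> : q * (k * p'.+1 + j) = (k * q) * p'.+1 + q * j.
      by rewrite mulnDr mulnA (mulnC q).
    by rewrite divnMDl // modnMDl.
have hflat k : flatten [seq g (block q w j) | j <- iota 0 k] = [seq w i | i <- iota 0 (k * p'.+1)].
  elim: k => [|k IH]; first by [].
  rewrite -addn1 iotaD add0n map_cat flatten_cat IH (_ : flatten [seq g (block q w j) | j <- iota k 1] = g (block q w k)); last by rewrite /= cats0.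
  rewrite hg mulnDl mul1n iotaD map_cat.
  by [].
split; first by move=> u; rewrite size_map size_iota.
split.
- move=> k i; rewrite hflat size_map size_iota => hi.
  by rewrite (nth_map 0) ?size_iota // nth_iota.
- move=> n /=; apply: Hx; exact: rep_ok.
Qed.
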